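(* If $T'$ is a subtree of a subcubic tree $T$, then $\gamma_e(T')\le\gamma_e(T)$.
   Context: All graphs are finite, simple and undirected; subcubic means maximum degree at most $3$; a subtree is a connected subgraph (a tree) of $T$. For a graph $G$ and $D\subseteq V(G)$, and vertices $u,v$, let $\mathrm{dist}_{(G,D)}(u,v)$ be the minimum number of edges of a path $P$ in $G$ between $u$ and $v$ such that $D$ contains exactly one endvertex of $P$ and no internal vertex of $P$ ($\infty$ if no such path exists; in particular $\mathrm{dist}_{(G,D)}(u,u)=0$ for $u\in D$). Let $w_{(G,D)}(u)=\sum_{v\in D}\left(\frac12\right)^{\mathrm{dist}_{(G,D)}(u,v)-1}$ with $\left(\frac12\right)^\infty=0$. $D$ is an exponential dominating set if $w_{(G,D)}(u)\ge 1$ for every $u\in V(G)$, and $\gamma_e(G)$ is the minimum size of an exponential dominating set. *)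

(* Defs.v *)
From HB Require Import structures.
From mathcomp Require Import all_boot all_order all_algebra.
Set Implicit Arguments. Unset Strict Implicit. Unset Printing Implicit Defensive.
Import Order.TTheory GRing.Theory Num.Theory.

(* A graph G is represented inside a finite type V by a vertex set
   S : {set V} and an edge relation e : rel V. *)
Section Graphs.
Variable V : finType.

Definition is_graph (S : {set V}) (e : rel V) : Prop :=
  (forall x y, e x y -> (x \in S) && (y \in S)) /\
  (forall x y, e x y = e y x) /\
  (forall x, ~~ e x x).

Definition connected_graph (S : {set V}) (e : rel V) : Prop :=
  forall x y, x \in S -> y \in S -> exists p : seq V, path e x p /\ last x p = y.

Definition acyclic (e : rel V) : Prop :=
  forall c : seq V, 3 <= size c -> uniq c -> ~~ cycle e c.

Definition is_tree (S : {set V}) (e : rel V) : Prop :=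
  [/\ is_graph S e, S != set0, connected_graph S e & acyclic e].

Definition subcubic (S : {set V}) (e : rel V) : Prop :=
  forall x, x \in S -> #|[set y | e x y]| <= 3.

Definition subgraph (S' : {set V}) (e' : rel V) (S : {set V}) (e : rel V) : Prop :=
  S' \subset S /\ (forall x y, e' x y -> e x y).

(* q is such that u :: q is a path in G from u to v, D contains exactly one
   endvertex of it and no internal vertex of it; its length is size q *)
Definition Dpath (S : {set V}) (e : rel V) (D : {set V}) (u v : V) (q : seq V) : bool :=
  [&& path e u q, last u q == v, uniq (u :: q), all (fun x => x \in S) (u :: q),
      #|D :&: [set u; v]| == 1 &
      all (fun x => x \notin D) (take (size q).-1 q)].

Definition Dconn (S : {set V}) (e : rel V) (D : {set V}) (k : nat) (u v : V) : bool :=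
  [exists q : k.-tuple V, Dpath S e D u v q].

(* dist_(G,D)(u,v); None stands for infinity.  A path has < #|V| edges. *)
Definition distD (S : {set V}) (e : rel V) (D : {set V}) (u v : V) : option nat :=
  if [exists k : 'I_#|V|, Dconn S e D k u v]
  then Some (\big[minn/#|V|]_(k < #|V| | Dconn S e D k u v) k)
  else None.

Local Open Scope ring_scope.

Definition weightD (S : {set V}) (e : rel V) (D : {set V}) (u : V) : rat :=
  \sum_(v in D) match distD S e D u v with
                | Some d => (1 / 2 : rat) ^ (d%:Z - 1)
                | None => 0
                end.

Definition exp_dom (S : {set V}) (e : rel V) (D : {set V}) : bool :=
  (D \subset S) && [forall u in S, 1 <= weightD S e D u].

Local Close Scope ring_scope.

Definition gamma_e (S : {set V}) (e : rel V) : nat :=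
  \big[minn/#|V|]_(D : {set V} | exp_dom S e D) #|D|.

End Graphs.

(* Main.v *)
Require Import Defs.
From HB Require Import structures.
From mathcomp Require Import all_boot all_order all_algebra.
From mathcomp Require Import ring lra zify.
Set Implicit Arguments. Unset Strict Implicit. Unset Printing Implicit Defensive.
Import Order.TTheory GRing.Theory Num.Theory.

Lemma nbigmin_le (I : eqType) (r : seq I) (P : pred I) (F : I -> nat) d i0 :
  i0 \in r -> P i0 -> \big[minn/d]_(i <- r | P i) F i <= F i0.
Proof.
elim: r => // a r IH; rewrite inE big_cons => /orP[/eqP<- ->|/IH H /H]; first by rewrite geq_minl.
by case: (P a) => // H'; rewrite geq_min H' orbT.
Qed.

Lemma nbigmin_mem (I : eqType) (r : seq I) (P : pred I) (F : I -> nat) d :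
  \big[minn/d]_(i <- r | P i) F i = d \/
  exists i, [/\ i \in r, P i & \big[minn/d]_(i <- r | P i) F i = F i].
Proof.
elim: r => [|a r IH]; first by left; rewrite big_nil.
rewrite big_cons; case: (boolP (P a)) => Pa; last first.
  case: IH => [->|[i [ir Pi ->]]]; [by left|right; exists i; split => //].
  by rewrite inE ir orbT.
case: (leqP (F a) (\big[minn/d]_(i <- r | P i) F i)) => H.
  by right; exists a; split; rewrite ?inE ?eqxx.
case: IH => [->|[i [ir Pi ->]]]; [by left|right; exists i; split => //].
by rewrite inE ir orbT.
Qed.


Local Open Scope ring_scope.
Definition hh (n : nat) : rat := (1/2 : rat) ^ (n%:Z - 1).

Lemma hh0 : hh 0 = 2.
Proof. by rewrite /hh sub0r -exprz_inv expr1z invf_div divr1. Qed.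

Lemma hhS n : hh n.+1 = (1/2) ^+ n.
Proof. by rewrite /hh -(addn1 n) PoszD addrK. Qed.

Lemma hhE n : hh n = 2 * (1/2) ^+ n.
Proof.
case: n => [|n]; first by rewrite hh0 expr0 mulr1.
by rewrite hhS exprS mulrA (_ : 2 * (1/2) = 1 :> rat) ?mul1r.
Qed.

Lemma hh_ge0 n : 0 <= hh n.
Proof. by rewrite hhE mulr_ge0 // exprn_ge0. Qed.

Lemma hh_anti m n : (m <= n)%N -> hh n <= hh m.
Proof.
by move=> mn; rewrite !hhE ler_wpM2l //; apply: ler_wiXn2l.
Qed.

Lemma hhD m n : hh (m + n) = (1/2) ^+ m * hh n.
Proof. by rewrite !hhE exprD mulrCA. Qed.

Lemma hh1 : hh 1 = 1.
Proof. by rewrite hhS expr0. Qed.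

Local Close Scope ring_scope.

Definition term (V : finType) (S : {set V}) (e : rel V) (D : {set V}) (u v : V) : rat :=
  match distD S e D u v with Some d => hh d | None => 0%R end.

Lemma weightE (V : finType) (S : {set V}) (e : rel V) (D : {set V}) u :
  weightD S e D u = (\sum_(v in D) term S e D u v)%R.
Proof. by []. Qed.

Lemma term_ge0 (V : finType) (S : {set V}) (e : rel V) (D : {set V}) u v : (0 <= term S e D u v)%R.
Proof. by rewrite /term; case: distD => // d; exact: hh_ge0. Qed.

Lemma DconnP (V : finType) (S : {set V}) (e : rel V) (D : {set V}) k u v :
  reflect (exists q, size q = k /\ Dpath S e D u v q) (Dconn S e D k u v).
Proof.
apply: (iffP existsP) => [[q Hq]|[q [sq Hq]]].
  by exists (tval q); rewrite size_tuple.
have sq' : size q == k by rewrite sq.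
by exists (Tuple sq').
Qed.

Lemma dist_wit (V : finType) (S : {set V}) (e : rel V) (D : {set V}) u v d :
  distD S e D u v = Some d -> exists q, Dpath S e D u v q /\ size q = d.
Proof.
rewrite /distD; case: ifP => // /existsP [k Hk] [<-].
case: (nbigmin_mem (index_enum 'I_#|V|) (fun k => Dconn S e D k u v) (fun k => nat_of_ord k) #|V|).
  move=> H; have := @nbigmin_le _ (index_enum 'I_#|V|) (fun k => Dconn S e D k u v) (fun k : 'I_#|V| => nat_of_ord k) #|V| k (mem_index_enum k) Hk.
  by rewrite H leqNgt ltn_ord.
move=> [i [_ Hi ->]]; case/DconnP: Hi => q [sq Hq]; by exists q.
Qed.

Lemma DpathP (V : finType) (S : {set V}) (e : rel V) (D : {set V}) u v q :
  Dpath S e D u v q <->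
  [/\ path e u q, last u q = v, uniq (u :: q), all (fun x => x \in S) (u :: q) &
     #|D :&: [set u; v]| = 1 /\ all (fun x => x \notin D) (take (size q).-1 q)].
Proof.
rewrite /Dpath; split.
  by case/andP => -> /andP[/eqP -> /andP[-> /andP[-> /andP[/eqP -> ->]]]].
by case=> -> -> -> -> [-> ->]; rewrite !eqxx.
Qed.

Lemma Dpath_size (V : finType) (S : {set V}) (e : rel V) (D : {set V}) u v q :
  Dpath S e D u v q -> size q < #|V|.
Proof.
case/DpathP => _ _ uq _ _.
have : size (u :: q) <= #|V| by rewrite -(card_uniqP uq) max_card.
by [].
Qed.

Lemma dist_some (V : finType) (S : {set V}) (e : rel V) (D : {set V}) u v q :
  Dpath S e D u v q -> exists d, distD S e D u v = Some d /\ d <= size q.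
Proof.
move=> Hq; have sq := Dpath_size Hq.
have Hk : Dconn S e D (Ordinal sq) u v by apply/DconnP; exists q.
rewrite /distD; have -> : [exists k : 'I_#|V|, Dconn S e D k u v] by apply/existsP; exists (Ordinal sq).
eexists; split; first by [].
exact: (@nbigmin_le _ (index_enum 'I_#|V|) (fun k => Dconn S e D k u v) (fun k : 'I_#|V| => nat_of_ord k) #|V| _ (mem_index_enum (Ordinal sq)) Hk).
Qed.

Lemma term_mono (V : finType) (S S2 : {set V}) (e e2 : rel V) (D D2 : {set V}) u v u2 v2 :
  (forall q, Dpath S e D u v q -> exists q2, Dpath S2 e2 D2 u2 v2 q2 /\ size q2 <= size q) ->
  (term S e D u v <= term S2 e2 D2 u2 v2)%R.
Proof.
move=> H; rewrite /term; case E: (distD S e D u v) => [d|]; last exact: (term_ge0 S2 e2 D2 u2 v2).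
have [q [Hq sq]] := dist_wit E.
have [q2 [Hq2 s2]] := H q Hq.
have [d2 [-> d2le]] := dist_some Hq2.
by apply: hh_anti; rewrite -sq (leq_trans d2le s2).
Qed.

Lemma term_none (V : finType) (S : {set V}) (e : rel V) (D : {set V}) u v :
  (forall q, ~~ Dpath S e D u v q) -> term S e D u v = 0%R.
Proof.
move=> H; rewrite /term; case E: (distD S e D u v) => [d|] //.
by have [q [Hq _]] := dist_wit E; move: (H q); rewrite Hq.
Qed.

Lemma term_self (V : finType) (S : {set V}) (e : rel V) (D : {set V}) u :
  u \in S -> u \in D -> term S e D u u = 2%R.
Proof.
move=> uS uD.
have Hq : Dpath S e D u u [::].
  rewrite /Dpath /= eqxx uS /= andbT.
  have -> : D :&: [set u; u] = [set u] by apply/setP => x; rewrite !inE orbb andb_idl // => /eqP ->.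
  by rewrite cards1.
have [d [Hd dle]] := dist_some Hq.
by move: dle; rewrite leqn0 /term Hd => /eqP ->; rewrite hh0.
Qed.

Lemma weight_self (V : finType) (S : {set V}) (e : rel V) (D : {set V}) u :
  u \in S -> u \in D -> (1 <= weightD S e D u)%R.
Proof.
move=> uS uD; rewrite weightE (bigD1 u) //= term_self //.
have : (0 <= \sum_(i in D | i != u) term S e D u i)%R by apply: sumr_ge0 => i _; exact: term_ge0.
lra.
Qed.

Section Tree.
Variables (V : finType) (e : rel V).
Hypothesis esym : forall x y, e x y = e y x.
Hypothesis acyc : acyclic e.

Lemma meet_contra x y z p q :
  y != z -> path e x (y :: p) -> path e x (z :: q) ->
  uniq (x :: y :: p) -> uniq (x :: z :: q) -> last y p = last z q -> False.
Proof.
move=> yz; set s := y :: p; set t := z :: q => ps pt us ut el.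
have hs : has (mem t) s.
  by apply/hasP; exists (last y p); [exact: mem_last | rewrite el; exact: mem_last].
set i := find (mem t) s.
have ilt : i < size s by rewrite -has_find.
set w := nth x s i.
have wt : w \in t by exact: (nth_find x hs).
set p1 := take i s.
have hp1 : ~~ has (mem t) p1 by rewrite has_take // ltnn.
have sdec : s = p1 ++ w :: drop i.+1 s by rewrite /p1 /w -drop_nth // cat_take_drop.
have [t1 [t2 tdec]] : exists t1 t2, t = t1 ++ w :: t2.
  by case/splitPr: wt => t1 t2; exists t1, t2.
rewrite tdec in ut pt hp1.
move: (us) (ps); rewrite sdec => us' ps'.
have xnp1 : x \notin p1 by move: us'; rewrite cons_uniq mem_cat negb_or => /andP[/andP[]].
have xnw : x != w by move: us'; rewrite cons_uniq mem_cat inE negb_or => /andP[/andP[_ /norP[]]].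
have up1 : uniq (p1 ++ [:: w]).
  by move: us'; rewrite cons_uniq -cat1s catA cat_uniq => /andP[_ /andP[]].
have xnt1 : x \notin t1 by move: ut; rewrite cons_uniq mem_cat negb_or => /andP[/andP[]].
have ut1 : uniq (t1 ++ [:: w]).
  by move: ut; rewrite cons_uniq -cat1s catA cat_uniq => /andP[_ /andP[]].
have cyc : cycle e (x :: p1 ++ w :: rev t1).
  rewrite /= rcons_cat /= -rev_cons cat_path /=.
  move: ps'; rewrite cat_path /= => /and3P[-> -> _] /=.
  have H : path e x (rcons t1 w) by move: pt; rewrite -cats1 !cat_path /= => /and3P[-> ->].
  have := rev_path e x (rcons t1 w); rewrite last_rcons belast_rcons => ->.
  by rewrite (@eq_path _ _ e) // => a b /=; exact: esym.
have ucyc : uniq (x :: p1 ++ w :: rev t1).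
  rewrite -cat_cons cat_uniq; apply/and3P; split.
  - by rewrite /= xnp1; move: up1; rewrite cat_uniq => /andP[].
  - apply/hasPn => a; rewrite inE mem_rev => /orP[/eqP->|at1].
      rewrite inE negb_or eq_sym xnw /=.
      by move: up1; rewrite cat_uniq /= orbF andbT => /andP[].
    rewrite inE negb_or; apply/andP; split.
      by apply/negP => /eqP ax; move: xnt1; rewrite -ax at1.
    apply/negP => ap1; move/hasPn: hp1 => /(_ a ap1); by rewrite /= mem_cat at1.
  - by rewrite /= mem_rev rev_uniq; move: ut1; rewrite cat_uniq /= orbF !andbT andbC.
have sz : 3 <= size (x :: p1 ++ w :: rev t1).
  rewrite /= size_cat /= size_rev.
  clear -yz sdec tdec.
  case: p1 sdec => [|a p1'] sdec; case: t1 tdec => [|b t1'] tdec //=; rewrite ?addnS //.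
  by move: yz; rewrite /s in sdec; rewrite /t in tdec; case: sdec => ->; case: tdec => ->; rewrite eqxx.
by move: (acyc sz ucyc); rewrite cyc.
Qed.

Lemma tree_path_uniq x p q :
  path e x p -> path e x q -> uniq (x :: p) -> uniq (x :: q) -> last x p = last x q -> p = q.
Proof.
elim: p x q => [|y p IH] x [|z q] //=.
- move=> _ _ _ /andP[xn _] E; exfalso; move: xn; rewrite E.
  by rewrite mem_last.
- move=> _ _ /andP[xn _] _ E; exfalso; move: xn; rewrite -E.
  by rewrite mem_last.
move=> /andP[exy py] /andP[exz pz] uxp uxq E.
case: (eqVneq y z) => [yz|yz].
  subst z; congr (_ :: _); apply: (IH y) => //.
  - by case/and3P: uxp => _ ? ?; apply/andP.
  - by case/and3P: uxq => _ ? ?; apply/andP.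
exfalso; apply: (@meet_contra x y z p q) => //=; rewrite ?exy ?exz //.
Qed.
End Tree.


Section Side.
Variables (V : finType) (S : {set V}) (e : rel V) (D : {set V}).
Hypothesis eS : forall x y, e x y -> x \in S.
Hypothesis esym : forall x y, e x y = e y x.
Hypothesis sub3 : subcubic S e.

Definition side_ok (n : nat) (x y : V) (A : {set V}) (Q : V -> seq V) :=
  forall v, v \in A -> [/\ v \in D, exists tl, Q v = y :: tl, path e x (Q v), uniq (x :: Q v) &
        [/\ last x (Q v) = v, all (fun z => z \notin D) (take (size (Q v)).-1 (Q v)) & size (Q v) <= n]].

Lemma side n : forall x y (A : {set V}) (Q : V -> seq V),
  e x y -> side_ok n x y A Q -> (\sum_(v in A) hh (size (Q v)) <= 1)%R.
Proof.
elim: n => [|n IH] x y A Q exy ok.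
  rewrite big1 ?ler01 // => v vA; exfalso.
  by case: (ok v vA) => _ [tl ->] _ _ [].
case: (boolP (y \in D)) => yD.
  have sub : A \subset [set y].
    apply/subsetP => v vA; rewrite inE.
    case: (ok v vA) => vD [[|z tl] Qv] _ _ [lv int _].
      by move: lv; rewrite Qv /= => ->.
    by move: int; rewrite Qv /= yD.
  rewrite (eq_bigr (fun _ => 1%R)); last first.
    move=> v vA; have := subsetP sub v vA; rewrite inE => /eqP vy.
    case: (ok v vA) => vD [[|z tl] Qv] _ _ [lv int _]; first by rewrite Qv hh1.
    by move: int; rewrite Qv /= yD.
  rewrite sumr_const; have := subset_leq_card sub; rewrite cards1.
  by case: #|A| => [|[|//]] _; rewrite ?mulr0n ?mulr1n.
set N := [set z | e y z && (z != x)].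
have yS : y \in S by apply: (eS (y := x)); rewrite esym.
have cN : (#|N| <= 2)%N.
  have := sub3 yS; rewrite (cardsD1 x) inE -esym exy /= add1n ltnS.
  suff -> : [set y0 | e y y0] :\ x = N by [].
  by apply/setP => z; rewrite !inE andbC.
pose Q' v := behead (Q v).
have okv : forall v, v \in A -> exists z tl, Q v = y :: z :: tl.
  move=> v vA; case: (ok v vA) => vD [[|z tl] Qv] _ _ [lv _ _]; last by exists z, tl.
  by move: vD; rewrite -lv Qv /= (negbTE yD).
have -> : (\sum_(v in A) hh (size (Q v)) = 2^-1 * \sum_(v in A) hh (size (Q' v)))%R.
  rewrite mulr_sumr; apply: eq_bigr => v vA.
  have [z [tl Qv]] := okv v vA; rewrite /Q' Qv /= -add1n hhD expr1.
  by rewrite div1r.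
rewrite (partition_big (fun v => head y (Q' v)) (mem N)); last first.
  move=> v vA; have [z [tl Qv]] := okv v vA; rewrite /Q' Qv /= inE.
  case: (ok v vA) => _ _ + + _; rewrite Qv => pv uv.
  move: pv => /= /and3P[_ -> _] /=.
  move: uv; rewrite cons_uniq !inE negb_or => /andP[/andP[_ H] _].
  by apply/negP => /eqP zx; move: H; rewrite zx eqxx.
have : (\sum_(j in N) \sum_(i in A | head y (Q' i) == j) hh (size (Q' i)) <= #|N|%:R)%R.
  rewrite -sumr_const; apply: ler_sum => z zN.
  have -> : (\sum_(i in A | head y (Q' i) == z) hh (size (Q' i)) =
             \sum_(i in [set i in A | head y (Q' i) == z]) hh (size (Q' i)))%R.
    by apply: eq_bigl => i; rewrite inE.
  apply: (IH y z); first by move: zN; rewrite inE => /andP[].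
  move=> v; rewrite inE => /andP[vA /eqP hz].
  have [z' [tl Qv]] := okv v vA.
  case: (ok v vA) => vD _ + + [lv int sz]; rewrite Qv /= => /and3P[_ e1 p1] /andP[_ u1].
  move: hz int sz lv; rewrite /Q' Qv /= => hz; subst z'.
  move=> int sz lv; split => //; first by exists tl.
  - by rewrite /= e1 p1.
  by split => //; move: int => /andP[].
move=> H; apply: (le_trans (ler_wpM2l _ H)); first by [].
have : (#|N|%:R <= 2 :> rat)%R by rewrite ler_nat.
lra.
Qed.
End Side.


Lemma split_at (T : eqType) (x : T) s :
  x \in s -> s = take (index x s) s ++ x :: drop (index x s).+1 s.
Proof.
move=> xs; have H := nth_index x xs.
by rewrite -{2}H -drop_nth ?index_mem // cat_take_drop.
Qed.

Lemma take_int (T : Type) (r s : seq T) x :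
  take (size (r ++ x :: s)).-1 (r ++ x :: s) = r ++ take (size s) (x :: s).
Proof.
rewrite size_cat /= addnS /= take_cat ltnNge leq_addr /=.
by rewrite addKn.
Qed.

Lemma take_cons_int (T : eqType) (s : seq T) x :
  s != [::] -> take (size s) (x :: s) = x :: take (size s).-1 s.
Proof. by case: s. Qed.

Section Step.
Variables (V : finType) (S : {set V}) (e : rel V) (l p : V).
Hypothesis gS : is_graph S e.
Hypothesis acyc : acyclic e.
Hypothesis sub3 : subcubic S e.
Hypothesis elp : e l p.
Hypothesis leaf : forall y, e l y -> y = p.

Definition S2 := S :\ l.
Definition e2 := [rel x y | e x y && (x != l) && (y != l)].

Lemma gesym : forall x y, e x y = e y x.
Proof. by case: gS => _ []. Qed.
Lemma geS : forall x y, e x y -> x \in S.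
Proof. by case: gS => H _ x y /H /andP[]. Qed.
Lemma geirr : forall x, ~~ e x x.
Proof. by case: gS => _ []. Qed.
Lemma lS : l \in S. Proof. exact: geS elp. Qed.
Lemma pS : p \in S. Proof. by apply: (geS (y := l)); rewrite gesym. Qed.
Lemma lp : l != p.
Proof. by apply/eqP => E; move: elp; rewrite E; move: (geirr p) => /negbTE ->. Qed.

Lemma noL x q : path e x q -> uniq (x :: q) -> x != l -> last x q != l -> l \notin q.
Proof.
move=> pq uq xl ll; apply/negP => lq.
case/splitPr: lq pq uq ll => q1 q2 pq uq ll.
case: q2 pq uq ll => [|b q2] pq uq ll; first by rewrite last_cat eqxx in ll.
move: pq; rewrite cat_path /= => /and3P[_ ea /andP[eb _]].
have bp := leaf eb; have ap : last x q1 = p by apply: leaf; rewrite gesym.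
move: uq; rewrite -cat_cons cat_uniq => /and3P[_ /hasPn H _].
have H1 : b \in l :: b :: q2 by rewrite !inE eqxx orbT.
by move: (H b H1); rewrite bp -ap mem_last.
Qed.

Lemma path2 x q : path e x q -> x != l -> l \notin q -> path e2 x q.
Proof.
elim: q x => [|y q IH] x //= /andP[exy pq] xl; rewrite inE negb_or => /andP[ly lq].
by rewrite exy xl eq_sym ly /= IH // eq_sym.
Qed.

Lemma mkDpath2 (D2 : {set V}) u v q :
  path e u q -> last u q = v -> uniq (u :: q) -> all (fun x => x \in S) (u :: q) ->
  u != l -> v != l -> #|D2 :&: [set u; v]| = 1%N ->
  all (fun x => x \notin D2) (take (size q).-1 q) -> Dpath S2 e2 D2 u v q.
Proof.
move=> pq lq uq aS ul vl c1 ai.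
have lnq : l \notin q by apply: (@noL u); rewrite ?lq.
apply/DpathP; split => //; first exact: path2.
- apply/allP => x xq; rewrite /S2 !inE (allP aS x xq) andbT.
  by move: xq; rewrite inE => /orP[/eqP->|xq] //; apply/negP => /eqP xl; move: lnq; rewrite -xl xq.
Qed.

Lemma Dpath_transfer (D D2 : {set V}) u v q :
  Dpath S e D u v q -> u != l -> v != l ->
  (forall w, w \in u :: q -> (w \in D2) = (w \in D)) -> Dpath S2 e2 D2 u v q.
Proof.
case/DpathP => pq lq uq aS [c1 ai] ul vl agr.
apply: mkDpath2 => //.
  rewrite -c1; apply: eq_card => x; rewrite !inE.
  case: (eqVneq x u) => [->|_] /=; first by rewrite agr ?mem_head.
  case: (eqVneq x v) => [->|_] /=; last by rewrite !andbF.
  by rewrite agr // -lq mem_last.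
apply/allP => x xt; rewrite agr; first exact: (allP ai x xt).
by rewrite inE (mem_take xt) orbT.
Qed.

Lemma term_exact (D : {set V}) u v q :
  Dpath S e D u v q -> term S e D u v = hh (size q).
Proof.
move=> Hq; have [d [Hd dle]] := dist_some Hq.
have [q' [Hq' sq']] := dist_wit Hd.
rewrite /term Hd -sq'; congr hh; congr size.
case/DpathP: Hq => pq lq uq _ _; case/DpathP: Hq' => pq' lq' uq' _ _.
by apply: (@tree_path_uniq _ _ gesym acyc u); rewrite ?lq ?lq'.
Qed.

Lemma term_ge (S0 : {set V}) (e0 : rel V) (D : {set V}) u v q :
  Dpath S0 e0 D u v q -> (hh (size q) <= term S0 e0 D u v)%R.
Proof.
move=> Hq; have [d [Hd dle]] := dist_some Hq.
by rewrite /term Hd; apply: hh_anti.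
Qed.

Lemma pred_p (D : {set V}) u q :
  Dpath S e D u l q -> u != p -> u != l -> p \in take (size q).-1 q.
Proof.
case/DpathP => pq lq _ _ _ up ul.
case/lastP: q pq lq => [|q0 b] pq lq; first by move: ul; rewrite -lq /= eqxx.
rewrite last_rcons in lq; subst b.
rewrite size_rcons /= -cats1 take_size_cat //.
move: pq; rewrite rcons_path => /andP[_ H].
have H' : last u q0 = p by apply: leaf; rewrite gesym.
case: q0 H' {H} => [|a q0] /= H'; first by move: up; rewrite H' eqxx.
by rewrite -H' mem_last.
Qed.

Lemma notl_in u q : path e u q -> uniq (u :: q) -> u != l -> last u q != l ->
  forall w, w \in u :: q -> w != l.
Proof.
move=> pq uq ul ll w; rewrite inE => /orP[/eqP->//|wq].
apply/negP => /eqP wl; have := noL pq uq ul ll; by rewrite -wl wq.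
Qed.

Lemma step_nonswap (D : {set V}) :
  exp_dom S e D -> ~~ ((l \in D) && (p \notin D)) -> exp_dom S2 e2 (D :\ l).
Proof.
case/andP => DS /forall_inP W nsw; apply/andP; split; first exact: setSD.
apply/forall_inP => u uS2; have [ul uS] : u != l /\ u \in S by move: uS2; rewrite !inE => /andP[].
case: (boolP (u \in D :\ l)) => uD2; first exact: weight_self.
have uD : u \notin D by move: uD2; rewrite !inE ul.
apply: le_trans (W u uS) _; rewrite !weightE (bigID (fun v => v == l)) /=.
rewrite [X in (X + _)%R]big1 ?add0r; last first.
  move=> v /andP[vD /eqP vl]; subst v; apply: term_none => q; apply/negP => Hq.
  have pD : p \in D by move: nsw; rewrite vD /= negbK.
  have up : u != p by apply/negP => /eqP up; move: uD; rewrite up pD.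
  have := pred_p Hq up ul; case/DpathP: Hq => _ _ _ _ [_ /allP ai] /ai.
  by rewrite pD.
rewrite [X in (_ <= X)%R](eq_bigl (fun v => (v \in D) && (v != l))); last first.
  by move=> v; rewrite !inE andbC.
apply: ler_sum => v /andP[vD vl]; apply: term_mono => q Hq; exists q; split => //.
apply: (Dpath_transfer Hq ul vl) => w wq.
have := Hq; case/DpathP => pq lq uq _ _.
have wl : w != l := notl_in pq uq ul (ltac:(by rewrite lq)) wq.
by rewrite !inE wl.
Qed.

Lemma seg_facts (D : {set V}) u v r s : Dpath S e D u v (r ++ p :: s) ->
  [/\ path e u (rcons r p), uniq (u :: rcons r p), path e p s, uniq (p :: s) & last p s = v].
Proof.
case/DpathP => pq lq uq _ _.
move: pq; rewrite cat_path /= => /and3P[a b c].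
have u1 := uq; rewrite -cat_rcons -cat_cons cat_uniq in u1; case/and3P: u1 => u1 _ _.
have u2 : uniq (p :: s) by move: uq => /= /andP[_]; rewrite cat_uniq => /and3P[_ _].
split => //; first by rewrite rcons_path a b.
by move: lq; rewrite last_cat.
Qed.

Lemma step_swap (D : {set V}) :
  exp_dom S e D -> l \in D -> p \notin D -> exp_dom S2 e2 (p |: (D :\ l)).
Proof.
case/andP => DS /forall_inP W lD pD; set D2 := p |: (D :\ l).
have pl : p != l by rewrite eq_sym lp.
apply/andP; split.
  apply/subsetP => x; rewrite !inE => /orP[/eqP->|/andP[xl xD]]; first by rewrite pl pS.
  by rewrite xl (subsetP DS).
apply/forall_inP => u uS2; have [ul uS] : u != l /\ u \in S by move: uS2; rewrite !inE => /andP[].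
case: (boolP (u \in D2)) => uD2; first exact: weight_self.
have up : u != p by apply/negP => /eqP up; move: uD2; rewrite up !inE eqxx.
have uD : u \notin D by move: uD2; rewrite !inE ul /= negb_or => /andP[].
pose gp v := [exists k : 'I_#|V|, [exists q : k.-tuple V, Dpath S e D u v q && (p \in q)]].
have gpP : forall v, reflect (exists q, Dpath S e D u v q /\ p \in q) (gp v).
  move=> v; apply: (iffP existsP) => [[k /existsP[q /andP[Hq pq]]]|[q [Hq pq]]].
    by exists (tval q).
  exists (Ordinal (Dpath_size Hq)); apply/existsP.
  have sq : size q == Ordinal (Dpath_size Hq) by [].
  by exists (Tuple sq); rewrite /= Hq pq.
apply: le_trans (W u uS) _; rewrite !weightE.
have pDl : p \notin D :\ l by rewrite !inE negb_and pD orbT.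
rewrite (big_setU1 _ pDl) /= (bigID gp) /=.
apply: lerD; last first.
  pose f v := if v == l then 0%R else term S2 e2 D2 u v.
  apply: (@le_trans _ _ (\sum_(v in D | ~~ gp v) f v)%R).
    apply: ler_sum => v /andP[vD ngp]; rewrite /f; case: eqP => [vl|/eqP vl].
      subst v; rewrite term_none // => q; apply/negP => Hq.
      have := pred_p Hq up ul => /mem_take pq.
      by move: ngp; case: (gpP l) => //; case; exists q.
    apply: term_mono => q Hq; exists q; split => //.
    apply: (Dpath_transfer Hq ul vl) => w wq.
    have := Hq; case/DpathP => pq lq uq _ _.
    have wl : w != l := notl_in pq uq ul (ltac:(by rewrite lq)) wq.
    have wp : w != p.
      apply/negP => /eqP wp; subst w; move: wq; rewrite inE eq_sym (negbTE up) /= => pq'.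
      by move: ngp; case: (gpP v) => //; case; exists q.
    by rewrite !inE wl (negbTE wp).
  apply: (@le_trans _ _ (\sum_(v in D) f v)%R).
    rewrite [X in (_ <= X)%R](bigID gp) /= lerDr; apply: sumr_ge0 => v _.
    by rewrite /f; case: eqP => // _; exact: term_ge0.
  rewrite (big_setD1 _ lD) /= /f eqxx add0r le_eqVlt; apply/orP; left; apply/eqP.
  by apply: eq_bigr => v; rewrite !inE => /andP[/negbTE -> _].
case: (pickP (fun v => (v \in D) && gp v)) => [v0 /andP[v0D gv0]|none]; last first.
  by rewrite big_pred0 // term_ge0.
case: (gpP v0 gv0) => q0 [Hq0 pq0].
set r := take (index p q0) q0.
have q0dec := split_at pq0; rewrite -/r in q0dec.
have Hq0' := Hq0; rewrite q0dec in Hq0'.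
have [pPP uPP _ _ _] := seg_facts Hq0'.
set PP := rcons r p.
have aS0 : all (fun x => x \in S) (u :: PP).
  apply/allP => x; rewrite /PP inE mem_rcons inE => /orP[/eqP->//|/orP[/eqP->|xr]]; first exact: pS.
  by case/DpathP: Hq0 => _ _ _ /allP + _; apply; rewrite inE (mem_take xr) orbT.
have rD : all (fun x => x \notin D) r.
  by case/DpathP: Hq0' => _ _ _ _ [_]; rewrite take_int all_cat => /andP[].
have pnr : p \notin r by move: uPP => /= /andP[_]; rewrite rcons_uniq => /andP[].
have tnew : (hh (size PP) <= term S2 e2 D2 u p)%R.
  apply: term_ge; apply: mkDpath2 => //; first by rewrite /PP last_rcons.
  - have -> : D2 :&: [set u; p] = [set p].
      apply/setP => x; rewrite !inE; case: (eqVneq x p) => [->|xp] /=; first by rewrite orbT.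
      rewrite orbF; case: (eqVneq x u) => [->|] /=; last by rewrite andbF.
      by rewrite ul (negbTE uD).
    exact: cards1.
  - rewrite /PP size_rcons /= -cats1 take_size_cat //.
    apply/allP => x xr; rewrite !inE (negbTE (allP rD x xr)) andbF orbF.
    by apply/eqP => xp; move: pnr; rewrite -xp xr.
apply: le_trans tnew.
have exW : forall v, exists q, (Dpath S e D u v q && (p \in q)) || (~~ gp v && (q == [::])).
  move=> v; case: (boolP (gp v)) => g; last by exists [::]; rewrite eqxx orbT.
  by case: (gpP v g) => q [Hq pq]; exists q; rewrite Hq pq.
pose Wt v := xchoose (exW v).
have WP : forall v, gp v -> Dpath S e D u v (Wt v) /\ p \in Wt v.
  move=> v g; case/orP: (xchooseP (exW v)) => [/andP[H1 H2]|/andP[ng _]]; first by split.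
  by move: ng; rewrite g.
pose s v := drop (index p (Wt v)).+1 (Wt v).
have Wdec : forall v, gp v -> Wt v = r ++ p :: s v.
  move=> v g; have [Hv pv] := WP v g.
  have E := split_at pv.
  have Hv' := Hv; rewrite E in Hv'.
  have [pv1 uv1 _ _ _] := seg_facts Hv'.
  have : rcons (take (index p (Wt v)) (Wt v)) p = PP.
    by apply: (@tree_path_uniq _ _ gesym acyc u) => //; rewrite !last_rcons.
  by move/rcons_inj => [E']; rewrite {1}E E'.
have sfacts : forall v, gp v -> [/\ path e p (s v), uniq (p :: s v), last p (s v) = v,
    all (fun x => x \notin D) (take (size (s v)) (p :: s v)) &
    term S e D u v = hh (size PP + size (s v))].
  move=> v g; have [Hv _] := WP v g; have Hv' := Hv; rewrite Wdec // in Hv'.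
  have [_ _ ps us ls] := seg_facts Hv'.
  split => //.
    by case/DpathP: Hv' => _ _ _ _ [_]; rewrite take_int all_cat => /andP[].
  by rewrite (term_exact Hv) Wdec // size_cat /= /PP size_rcons addSnnS.
have hPP : hh (size PP) = ((1/2) ^+ size PP + (1/2) ^+ size PP)%R.
  by have := hhD (size PP) 0; rewrite addn0 hh0 => ->; lra.
rewrite hPP (bigID (fun v => v == l)) /=; apply: lerD.
  case: (boolP (gp l)) => gl; last first.
    rewrite big_pred0; first exact: exprn_ge0.
    by move=> v /=; case: (eqVneq v l) => [->|_]; rewrite ?(negbTE gl) ?andbF ?andbT.
  rewrite (big_pred1 l); last by move=> v /=; case: (eqVneq v l) => [->|_]; rewrite ?lD ?gl ?eqxx ?andbF.
  have [ps us ls _ ->] := sfacts l gl.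
  have -> : s l = [:: l].
    apply: (@tree_path_uniq _ _ gesym acyc p) => //=.
    - by rewrite -gesym elp.
    - by rewrite inE pl.
  by rewrite hhD hh1 mulr1.
set A2 := [set v in D | gp v && (v != l)].
rewrite (eq_bigl (mem A2)); last by move=> v; rewrite /A2 !inE andbA.
rewrite (eq_bigr (fun v => (1/2) ^+ size PP * hh (size (s v))))%R; last first.
  move=> v vA; have : v \in A2 by []. 
  by rewrite inE => /and3P[_ g _]; have [_ _ _ _ ->] := sfacts v g; rewrite hhD.
rewrite -mulr_sumr -[X in (_ <= X)%R]mulr1; apply: ler_wpM2l; first exact: exprn_ge0.
case: (set_0Vmem A2) => [->|[v1 v1A]]; first by rewrite big_set0 ler01.
set pr := last u r.
have epr : e p pr by move: pPP; rewrite rcons_path gesym => /andP[].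
have prl : pr != l.
  have lPP : l \notin PP by apply: (@noL u) => //; rewrite /PP last_rcons.
  have := mem_last u r; rewrite -/pr inE => /orP[/eqP->//|prr].
  by apply/negP => /eqP prl; move: lPP; rewrite -prl /PP mem_rcons inE prr orbT.
have bfacts : forall v, v \in A2 -> exists b tl, [/\ s v = b :: tl, e p b, b != l & b != pr].
  move=> v; rewrite inE => /and3P[vD g vl]; have [ps us ls _ _] := sfacts v g.
  case E : (s v) ps us ls => [|b tl] ps us ls.
    by move: vD; rewrite -ls (negbTE pD).
  exists b, tl; split => //; first by case/andP: ps.
  - apply/negP => /eqP bl; subst b; case: tl E ps us ls => [|c tl] E ps us ls.
      by move: vl; rewrite -ls /= eqxx.
    move: ps => /= /and3P[_ /leaf cp _]; subst c.
    by move: us; rewrite /= !inE eqxx !orbT.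
  - have [Hv _] := WP v g; case/DpathP: Hv => _ _ + _ _.
    rewrite Wdec // E -cat_cons cat_uniq => /and3P[_ /hasPn H _].
    apply/negP => /eqP bpr; have Hb : b \in p :: b :: tl by rewrite !inE eqxx orbT.
    by move: (H b Hb); rewrite bpr => /negP; apply; exact: mem_last.
have [x2 [tl1 [E1 ex2 x2l x2pr]]] := bfacts v1 v1A.
have same : forall v, v \in A2 -> exists tl, s v = x2 :: tl.
  move=> v vA; have [b [tl [E eb bl bpr]]] := bfacts v vA; exists tl; rewrite E.
  case: (eqVneq b x2) => [->//|bx2]; exfalso.
  have us4 : uniq [:: pr; l; x2; b].
    rewrite /= !inE !negb_or prl eq_sym x2pr eq_sym bpr eq_sym x2l eq_sym bl eq_sym bx2.
    by [].
  have sub4 : {subset [:: pr; l; x2; b] <= [set y | e p y]}.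
    by move=> y; rewrite !inE => /or4P[] /eqP->; rewrite ?epr ?ex2 ?eb // -gesym elp.
  have := sub3 pS; have := subset_leq_card (introT subsetP sub4).
  rewrite (card_uniqP us4) /= => h1 h2; have := leq_trans h1 h2; by rewrite ltnn.
apply: (side (D := D) (S := S) geS gesym sub3 (n := #|V|) (x := p) (y := x2)) => // v vA.
have : v \in A2 by []. rewrite inE => /and3P[vD g vl].
have [ps us ls int _] := sfacts v g; have [tl E] := same v vA.
split => //; first by exists tl.
split => //.
  by move: int; rewrite E /= => /andP[].
have [Hv _] := WP v g; rewrite /s size_drop; apply: leq_trans (leq_subr _ _) (ltnW (Dpath_size Hv)).
Qed.

Lemma step_dom (D : {set V}) :
  exp_dom S e D -> exists D2, exp_dom S2 e2 D2 /\ #|D2| <= #|D|.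
Proof.
move=> dD; case: (boolP ((l \in D) && (p \notin D))) => [/andP[lD pD]|nsw].
  exists (p |: (D :\ l)); split; first exact: step_swap.
  by rewrite cardsU1 (cardsD1 l D) lD !inE negb_and pD orbT add1n.
exists (D :\ l); split; first exact: step_nonswap.
by rewrite subset_leq_card // subD1set.
Qed.
End Step.

Lemma bigmin_le_fin (I : finType) (P : pred I) (F : I -> nat) d i0 :
  P i0 -> \big[minn/d]_(i | P i) F i <= F i0.
Proof. move=> H; have H2 := (@nbigmin_le I (index_enum I) P F d i0 (mem_index_enum i0) H); exact H2. Qed.

Lemma gamma_le (V : finType) (S : {set V}) (e : rel V) (D : {set V}) :
  exp_dom S e D -> gamma_e S e <= #|D|.
Proof.
move=> H; rewrite /gamma_e; have H2 := bigmin_le_fin (fun D : {set V} => #|D|) #|V| H; exact H2.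
Qed.

Lemma gamma_ge (V : finType) (S : {set V}) (e : rel V) m :
  m <= #|V| -> (forall D, exp_dom S e D -> m <= #|D|) -> m <= gamma_e S e.
Proof.
move=> mV H; rewrite /gamma_e.
case: (nbigmin_mem (index_enum {set V}) (fun D => exp_dom S e D) (fun D => #|D|) #|V|) => [->//|].
by move=> [D [_ HD ->]]; apply: H.
Qed.

Lemma gamma_leV (V : finType) (S : {set V}) (e : rel V) : gamma_e S e <= #|V|.
Proof.
rewrite /gamma_e.
case: (nbigmin_mem (index_enum {set V}) (fun D => exp_dom S e D) (fun D => #|D|) #|V|) => [->//|].
by move=> [D [_ HD ->]]; apply: max_card.
Qed.

Lemma step_gamma (V : finType) (S : {set V}) (e : rel V) (l p : V) :
  is_graph S e -> acyclic e -> subcubic S e -> e l p -> (forall y, e l y -> y = p) ->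
  gamma_e (S2 S l) (e2 e l) <= gamma_e S e.
Proof.
move=> gS ac sc elp leaf; apply: gamma_ge; first exact: gamma_leV.
move=> D dD; have [D2 [dD2 c2]] := step_dom gS ac sc elp leaf dD.
exact: leq_trans (gamma_le dD2) c2.
Qed.



Lemma rem_tree (V : finType) (S : {set V}) (e : rel V) (S' : {set V}) (e' : rel V) l p :
  is_tree S e -> subcubic S e -> subgraph S' e' S e -> is_tree S' e' -> l \notin S' ->
  e l p -> (forall y, e l y -> y = p) ->
  [/\ is_tree (S2 S l) (e2 e l), subcubic (S2 S l) (e2 e l) & subgraph S' e' (S2 S l) (e2 e l)].
Proof.
case=> gS _ cS ac sc [sub esub] [gS' ne' _ _] lS' elp leaf.
have sl : forall s, s \in S' -> s != l.
  by move=> s sS; apply/negP => /eqP sl; move: lS'; rewrite -sl sS.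
have gS2 : is_graph (S2 S l) (e2 e l).
  split; [|split].
  - move=> x y /= /andP[/andP[exy xl] yl]; rewrite /S2 !inE xl yl /=.
    by rewrite (geS gS exy) (geS gS (y := x)) // (gesym gS).
  - by move=> x y /=; rewrite (gesym gS x y) andbAC.
  - by move=> x /=; rewrite (negbTE (geirr gS x)).
split.
- split => //.
  + case/set0Pn: ne' => s sS'; apply/set0Pn; exists s.
    by rewrite /S2 !inE sl // (subsetP sub).
  + move=> x y; rewrite /S2 !inE => /andP[xl xS] /andP[yl yS].
    have [q [pq lq]] := cS x y xS yS.
    case: (shortenP pq) lq => q' pq' uq' _ lq.
    exists q'; split => //; apply: path2 => //.
    by apply: (noL gS leaf pq' uq' xl); rewrite lq.
  + move=> c c3 uc; apply/negP => cc; move: (ac c c3 uc); rewrite (sub_cycle _ cc) //.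
    by move=> x y /= /andP[/andP[]].
- move=> x; rewrite /S2 !inE => /andP[xl xS]; apply: leq_trans (sc x xS).
  by apply: subset_leq_card; apply/subsetP => y; rewrite !inE /= => /andP[/andP[]].
- split.
    by apply/subsetP => s sS'; rewrite /S2 !inE sl // (subsetP sub).
  move=> x y exy /=; rewrite esub //=.
  by case: gS' => H _; case/andP: (H x y exy) => xS yS; rewrite !sl.
Qed.


Lemma path_in (V : finType) (S' : {set V}) (e' : rel V) a s :
  is_graph S' e' -> path e' a s -> all (fun z => z \in S') s.
Proof.
move=> [H _]; elim: s a => [|b s IH] a //= /andP[eab ps].
by case/andP: (H a b eab) => _ ->; rewrite (IH b ps).
Qed.

Lemma suffix_out (V : finType) (S' : {set V}) (e : rel V) q : forall x,
  path e x q -> uniq (x :: q) -> exists x' q', [/\ x' = x \/ x' \in S', path e x' q', uniq (x' :: q'),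
    all (fun z => z \notin S') q' & last x' q' = last x q /\ {subset q' <= q}].
Proof.
elim: q => [|y q IH] x.
  by move=> _ _; exists x, [::]; split => //; left.
move=> /= /andP[exy pq] /andP[xn uq].
have [x' [q' [hx pq' uq' aq' [lq' sq']]]] := IH y pq uq.
case: hx => [hx|hx]; last first.
  exists x', q'; split => //; [by right | split => // z zq; by rewrite inE (sq' z zq) orbT].
subst x'; case: (boolP (y \in S')) => yS'.
  exists y, q'; split => //; [by right | split => // z zq; by rewrite inE (sq' z zq) orbT].
exists x, (y :: q'); split => //=; first by left.
- by rewrite exy pq'.
- apply/and3P; split; [|by case/andP: uq'|by case/andP: uq'].
  apply/negP => xin; move: xn; rewrite !inE.
  by move: xin; rewrite inE => /orP[->//|/sq' ->]; rewrite orbT.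
- by rewrite yS'.
- split => // z; rewrite !inE => /orP[->//|/sq' ->]; by rewrite orbT.
Qed.

Lemma leaf_search (V : finType) (S : {set V}) (e : rel V) (S' : {set V}) (e' : rel V) k :
  is_graph S e -> acyclic e -> is_graph S' e' -> connected_graph S' e' -> (forall x y, e' x y -> e x y) ->
  forall x q, x \in S' -> path e x q -> uniq (x :: q) -> all (fun z => z \notin S') q -> q != [::] ->
  #|V| - size q <= k ->
  exists l p, [/\ l \notin S', e l p & forall y, e l y -> y = p].
Proof.
move=> gS ac gS' cS' esub.
elim: k => [|k IH] x q xS' pq uq aq qn sz.
  move/card_uniqP: uq => cu; have := max_card (mem (x :: q)); rewrite cu /= => h; exfalso; move: sz; rewrite leqn0 subn_eq0 => sz; have := leq_trans h sz; by rewrite ltnn.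
case/lastP: q pq uq aq qn sz => [//|q0 t] pq uq aq _ sz.
set pr := last x q0.
have ept : e pr t by move: pq; rewrite rcons_path => /andP[].
have tS' : t \notin S' by move: aq; rewrite all_rcons => /andP[].
case: (boolP [forall z, e t z ==> (z == pr)]) => H.
  exists t, pr; split => //; first by rewrite (gesym gS).
  by move=> y ety; move/forallP: H => /(_ y); rewrite ety => /eqP.
case/forallPn: H => z; rewrite negb_imply => /andP[etz zpr].
have zt : z != t by apply/negP => /eqP zt; move: etz; rewrite zt (negbTE (geirr gS t)).
have sq : sorted e (rcons (x :: q0) t) := pq.
have uq' : uniq (rcons (x :: q0) t) := uq.
have zpr' : z != last x (x :: q0) := zpr.
case: (boolP (z \in x :: q0)) => zin.
  exfalso; case/splitPr: zin sq uq' zpr' => c1 c2 sq uq' zpr'.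
  have c2n : c2 != [::].
    by apply/negP => /eqP c2n; subst c2; move: zpr'; rewrite cats1 last_rcons eqxx.
  move: sq uq'; rewrite rcons_cat => /cat_sorted2 [_ sq] /=; rewrite cat_uniq => /and3P[_ _ uq'].
  have cy : cycle e (z :: rcons c2 t) by rewrite /= rcons_path last_rcons etz andbT; exact: sq.
  have sz3 : 3 <= size (z :: rcons c2 t) by rewrite /= size_rcons; case: c2 c2n {sq uq' cy zpr'}.
  by move: (ac _ sz3 uq'); rewrite cy.
case: (boolP (z \in S')) => zS'.
  exfalso.
  have zx : z != x by apply/negP => /eqP zx; move: zin; rewrite zx mem_head.
  have [r [pr' lr]] := cS' z x zS' xS'.
  case: (shortenP pr') lr => r' pr'' ur' _ lr.
  case/lastP: r' pr'' ur' lr => [|r0 x'] pr'' ur' lr; first by move: zx; rewrite -lr /= eqxx.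
  rewrite last_rcons in lr; subst x'.
  have aS'r : all (fun w => w \in S') (rcons r0 x) := path_in gS' pr''.
  set c := x :: (rcons q0 t ++ z :: r0).
  have cy : cycle e c.
    rewrite /c /= rcons_cat /= cat_path pq /= last_rcons etz /=.
    exact: (sub_path esub pr'').
  have uc : uniq c.
    rewrite /c -cat_cons cat_uniq uq andTb; apply/andP; split; last first.
      move: ur'; rewrite /= rcons_uniq mem_rcons inE negb_or => /andP[/andP[_ zr0] /andP[_ ur0]].
      by rewrite zr0 ur0.
    apply/hasPn => w; rewrite inE => /orP[/eqP->|wr0].
      by rewrite -[x :: rcons q0 t]/(rcons (x :: q0) t) mem_rcons inE (negbTE zt) (negbTE zin).
    have wS : w \in S' by apply: (allP aS'r); rewrite mem_rcons inE wr0 orbT.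
    rewrite inE negb_or; apply/andP; split.
      apply/negP => /eqP wx; subst w; move: ur'; rewrite /= rcons_uniq wr0.
      by rewrite andbF.
    by apply/negP => wq; move: (allP aq w wq); rewrite wS.
  have sz3 : 3 <= size c by rewrite /c /= size_cat size_rcons /= addSn addnS.
  by move: (ac _ sz3 uc); rewrite cy.
have znin : z \notin x :: rcons q0 t.
  by rewrite -[x :: rcons q0 t]/(rcons (x :: q0) t) mem_rcons inE (negbTE zt) (negbTE zin).
apply: (IH x (rcons (rcons q0 t) z)) => //.
- by rewrite rcons_path pq last_rcons etz.
- by rewrite -[x :: rcons _ z]/(rcons (x :: rcons q0 t) z) rcons_uniq znin uq.
- by rewrite all_rcons zS' aq.
- by rewrite -size_eq0 size_rcons.
- by move: sz; rewrite (size_rcons (rcons q0 t)) subnS; case: (_ - _).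
Qed.

Lemma leaf_exists (V : finType) (S : {set V}) (e : rel V) (S' : {set V}) (e' : rel V) :
  is_tree S e -> is_tree S' e' -> subgraph S' e' S e -> ~~ (S \subset S') ->
  exists l p, [/\ l \notin S', e l p & forall y, e l y -> y = p].
Proof.
case=> gS _ cS ac [gS' ne' cS' _] [sub esub] nsub.
case/subsetPn: nsub => w wS wS'.
case/set0Pn: ne' => s sS'.
have [q [pq lq]] := cS s w (subsetP sub s sS') wS.
case: (shortenP pq) lq => q1 pq1 uq1 _ lq1.
have [x' [q' [hx pq' uq' aq' [lq' _]]]] := suffix_out S' pq1 uq1.
have xS' : x' \in S' by case: hx => [->|].
have qn : q' != [::].
  apply/negP => /eqP qe; move: lq'; rewrite qe /= lq1 => E; move: wS'; by rewrite -E xS'.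
exact: (leaf_search (k := #|V|) gS ac gS' cS' esub xS' pq' uq' aq' qn (leq_subr _ _)).
Qed.

Lemma base_case (V : finType) (S : {set V}) (e e' : rel V) :
  is_tree S e -> is_tree S e' -> (forall x y, e' x y -> e x y) -> gamma_e S e' <= gamma_e S e.
Proof.
case=> gS _ cS ac [gS' _ cS' _] esub.
apply: gamma_ge; first exact: gamma_leV.
move=> D /andP[DS /forall_inP W]; apply: gamma_le; apply/andP; split => //.
apply/forall_inP => u uS; apply: le_trans (W u uS) _; rewrite !weightE.
apply: ler_sum => v _; apply: term_mono => q Hq; exists q; split => //.
case/DpathP: Hq => pq lq uq aS [c1 ai].
have vS : v \in S by rewrite -lq; apply: (allP aS); exact: mem_last.
have [r [pr lr]] := cS' u v uS vS.
case: (shortenP pr) lr => r' pr' ur' _ lr.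
have E : r' = q.
  apply: (@tree_path_uniq _ _ (gesym gS) ac u) => //; last by rewrite lr lq.
  exact: (sub_path esub pr').
apply/DpathP; split => //; by rewrite -E.
Qed.

Lemma main_ind (V : finType) (S' : {set V}) (e' : rel V) n : forall (S : {set V}) (e : rel V),
  #|S| <= n -> is_tree S e -> subcubic S e -> subgraph S' e' S e -> is_tree S' e' ->
  gamma_e S' e' <= gamma_e S e.
Proof.
elim: n => [|n IH] S e cS tS sc sg tS'.
  by case: tS => _ ne _ _; move: ne; rewrite -card_gt0 ltnNge cS.
case: (boolP (S \subset S')) => sS.
  have E : S' = S by apply/eqP; rewrite eqEsubset sS; case: sg => ->.
  subst S'; apply: base_case => //; by case: sg.
have [l [p [lS' elp leaf]]] := leaf_exists tS tS' sg sS.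
have [tS2 sc2 sg2] := rem_tree tS sc sg tS' lS' elp leaf.
case: (tS) => gS _ _ ac.
apply: leq_trans (step_gamma gS ac sc elp leaf).
apply: IH => //.
have lS : l \in S := geS gS elp.
by move: cS; rewrite (cardsD1 l S) lS add1n ltnS.
Qed.

Theorem lemma2 (V : finType) (S : {set V}) (e : rel V) (S' : {set V}) (e' : rel V) :
  is_tree S e -> subcubic S e -> subgraph S' e' S e -> is_tree S' e' ->
  gamma_e S' e' <= gamma_e S e.
Proof. by move=> tS sc sg tS'; apply: (main_ind (n := #|S|)). Qed.
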